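(* Assume the Continuum Hypothesis. Then there is a subspace $X$ of $\mathbb{R}$ which is a Baire space and such that \textsc{Bob} has no winning strategy in $\mathsf{BM}_\mathrm{fin}(X)$.
   Context: A Baire space is a space in which countable intersections of dense open sets are dense. The game $\mathsf{BM}_\mathrm{fin}(X)$: \textsc{Alice} plays a non-empty open set $A_0$; \textsc{Bob} plays a finite collection $\mathcal{B}_0$ of non-empty open subsets of $A_0$; in inning $n+1$, for each $B \in \mathcal{B}_n$ \textsc{Alice} plays a non-empty open set $A_B \subseteq B$, letting $\mathcal{A}_{n+1}=\{A_B : B\in\mathcal{B}_n\}$, and \textsc{Bob} plays a finite collection $\mathcal{B}_{n+1}$ of non-empty open subsets of $\bigcup\mathcal{A}_{n+1}$; \textsc{Bob} wins if $\bigcap_{n}\bigcup\mathcal{B}_n\neq\emptyset$, otherwise \textsc{Alice} wins. *)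

(* Defs.v *)
From HB Require Import structures.
From mathcomp Require Import all_boot all_order all_algebra.
From mathcomp Require Import all_classical all_reals.
From mathcomp Require Import topology normedtype.
Import numFieldTopology.Exports.
Set Implicit Arguments. Unset Strict Implicit. Unset Printing Implicit Defensive.
Import Order.TTheory GRing.Theory Num.Theory.
Local Open Scope classical_set_scope.

Definition CH (R : realType) : Prop :=
  forall A : set R, countable A \/ (A #= [set: R])%card.

Section Subspace.
Variables (T : topologicalType) (X : set T).

Definition relopen (U : set T) : Prop := exists V : set T, open V /\ U = X `&` V.

Definition reldense (D : set T) : Prop :=
  forall U, relopen U -> U !=set0 -> (U `&` D) !=set0.

Definition baire_subspace : Prop :=
  forall D : nat -> set T, (forall n, relopen (D n) /\ reldense (D n)) ->
    reldense (\bigcap_n D n).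

(* The game BM_fin(X).  Moves of both players are collections of subsets of X.
   Alice's first move is the singleton collection {A_0}. *)
Definition alice_first (A : set (set T)) : Prop :=
  exists A0, relopen A0 /\ A0 !=set0 /\ A = [set A0].

Definition alice_next (Bn : set (set T)) (A : set (set T)) : Prop :=
  exists f : set T -> set T,
    (forall B, Bn B -> relopen (f B) /\ f B !=set0 /\ f B `<=` B) /\
    A = f @` Bn.

Definition bob_legal (An : set (set T)) (Bn : set (set T)) : Prop :=
  finite_set Bn /\
  forall B, Bn B -> relopen B /\ B !=set0 /\ B `<=` \bigcup_(A in An) A.

(* A strategy for Bob (perfect information): Bob's move is a function of the
   sequence [:: A_0; A_1; ...; A_n] of Alice's moves so far (Bob's own earlier
   moves are determined by these through the strategy). *)
Definition bob_strategy := seq (set (set T)) -> set (set T).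

Definition bob_move (sigma : bob_strategy) (a : nat -> set (set T)) (n : nat) :=
  sigma (mkseq a n.+1).

Definition alice_legal_upto (sigma : bob_strategy) (a : nat -> set (set T))
    (n : nat) : Prop :=
  alice_first (a 0%N) /\
  forall k, (k < n)%N -> alice_next (bob_move sigma a k) (a k.+1).

Definition bob_winning (sigma : bob_strategy) : Prop :=
  forall a : nat -> set (set T),
    (forall n, alice_legal_upto sigma a n -> bob_legal (a n) (bob_move sigma a n)) /\
    ((forall n, alice_legal_upto sigma a n) ->
       (\bigcap_n \bigcup_(B in bob_move sigma a n) B) !=set0).

Definition bob_has_winning_strategy : Prop :=
  exists sigma : bob_strategy, bob_winning sigma.

End Subspace.

(* Main.v *)
Require Import Defs.
From mathcomp Require Import all_boot all_order all_algebra.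
From mathcomp Require Import all_classical all_reals.
From mathcomp Require Import topology normedtype.
From mathcomp Require Import sequences lra.
From mathcomp Require wochoice.
Import numFieldTopology.Exports.
Import Order.TTheory GRing.Theory Num.Theory.
Set Implicit Arguments. Unset Strict Implicit. Unset Printing Implicit Defensive.
Local Open Scope classical_set_scope.
Local Open Scope ring_scope.

Section Basics.
Variable R : realType.

Definition qs (n : nat) : R := ratr (odflt 0 (unpickle n : option rat)).

Definition basis (k : nat) : set R :=
  match (unpickle k : option (rat * rat)) with
  | Some (c, r) => ball (ratr c : R) (ratr r : R)
  | None => set0
  end.

Definition Gc (c : nat -> bool) : set R := \bigcup_(k in [set k | c k]) basis k.

Definition code_of (W : set R) : nat -> bool := fun k => `[< basis k `<=` W >].

Lemma basis_open k : open (basis k).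
Proof. rewrite /basis; case: (unpickle k) => [[c r]|]; [exact: (@ball_open _ R^o)| exact: open0]. Qed.

Lemma Gc_open c : open (Gc c).
Proof. by apply: bigcup_open => k _; exact: basis_open. Qed.

Lemma basis_in (V : set R) x : open V -> V x -> exists k, basis k x /\ basis k `<=` V.
Proof.
move=> oV Vx; have [c [r [xB BV]]] := open_subball_rat oV (mem_set Vx).
exists (pickle (c, r)); rewrite /basis pickleK; split => //.
by move: xB; rewrite inE.
Qed.

Lemma code_sub W : Gc (code_of W) `<=` W.
Proof. by move=> x [k /= /asboolP kW] /kW. Qed.

Lemma code_dense W : open W -> dense W -> dense (Gc (code_of W)).
Proof.
move=> oW dW O O0 oO.
have [x [Ox Wx]] := dW O O0 oO.
have [k [kx kOW]] := basis_in (openI oO oW) (conj Ox Wx).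
exists x; split => //; exists k => //=; apply/asboolP => y /kOW[] //.
Qed.

Lemma qs_dense (O : set R) : open O -> O !=set0 -> exists n, O (qs n).
Proof.
move=> oO O0; have [x [Ox [r _ rx]]] := dense_rat O0 oO.
by exists (pickle r); rewrite /qs pickleK /= rx.
Qed.

End Basics.

Lemma cantor_diag : ~ countable [set: nat -> bool].
Proof.
move=> /countable_injP[g ginj].
pose E n := exists f : nat -> bool, g f = n /\ f n.
pose d n := ~~ `[< E n >].
case: (boolP `[< E (g d) >]) => [/asboolP [f [gf fn]] | /asboolP nE].
  have fd : f = d by apply: ginj; rewrite ?inE.
  have EE : E (g d) by exists f.
  by move: fn; rewrite fd /d (asboolT EE).
have nE' := nE; apply: nE; exists d; split => //; rewrite /d.
by apply/negP => /asboolP.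
Qed.

Section Inj.
Variable R : realType.
Definition w3 (i : nat) : R := (3^-1) ^+ i.
Definition P3 (f : nat -> bool) (n : nat) : R := \sum_(i < n) (f i)%:R * w3 i.
Definition xf (f : nat -> bool) : R := sup (range (P3 f)).

Lemma w3_gt0 i : 0 < w3 i. Proof. by rewrite /w3 exprn_gt0 // invr_gt0. Qed.
Lemma w3S i : w3 i.+1 = w3 i / 3. Proof. by rewrite /w3 exprSr. Qed.

Lemma P3S f n : P3 f n.+1 = P3 f n + (f n)%:R * w3 n.
Proof. by rewrite /P3 big_ord_recr. Qed.

Lemma P3_mono f m n : (m <= n)%N -> P3 f m <= P3 f n.
Proof.
move=> /subnK <-; elim: (n - m)%N => [|k IH] //; rewrite addSn P3S.
apply: (le_trans IH); rewrite lerDl mulr_ge0 // ?ltW ?w3_gt0 //.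
Qed.

Lemma P3_bound f m n : (m <= n)%N -> P3 f n <= P3 f m + 3/2 * (w3 m - w3 n).
Proof.
move=> /subnK <-; elim: (n - m)%N => [|k IH]; first by rewrite add0n subrr mulr0 addr0.
rewrite addSn P3S w3S.
have hw := w3_gt0 (k + m); have hb : (f (k + m)%N)%:R <= 1 :> R by case: (f _).
have hb0 : 0 <= (f (k + m)%N)%:R :> R by case: (f _).
have : (f (k + m)%N)%:R * w3 (k + m) <= w3 (k + m) by rewrite ler_piMl // ltW.
lra.
Qed.

Lemma P3_ub f n : P3 f n <= 3/2.
Proof.
have := P3_bound f (leq0n n); rewrite /P3 big_ord0 /w3 expr0 add0r.
have := w3_gt0 n; rewrite /w3; lra.
Qed.

Lemma P3_hassup f : has_ubound (range (P3 f)).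
Proof. by exists (3/2) => _ [n _ <-]; exact: P3_ub. Qed.

Lemma xf_ge f n : P3 f n <= xf f.
Proof. by apply: ub_le_sup; [exact: P3_hassup| exists n]. Qed.

Lemma xf_lt f g m : (forall i, (i < m)%N -> f i = g i) -> f m = true -> g m = false ->
  xf g < xf f.
Proof.
move=> fg fm gm.
have eqm : P3 f m = P3 g m by apply: eq_bigr => i _; rewrite fg.
have h1 : P3 f m + w3 m <= xf f by have := xf_ge f m.+1; rewrite P3S fm mul1r.
have h2 : xf g <= P3 g m + w3 m / 2.
  apply: ge_sup; first by exists (P3 g 0), 0%N.
  move=> _ [n _ <-]; case: (leqP n m) => nm.
    by apply: (le_trans (P3_mono g nm)); rewrite lerDl divr_ge0 // ltW // w3_gt0.
  have := P3_bound g nm; rewrite P3S gm mul0r addr0 w3S.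
  have := w3_gt0 n; have := w3_gt0 m; lra.
have := w3_gt0 m; lra.
Qed.

Lemma xf_inj : injective xf.
Proof.
move=> f g fg; apply/funext => i; apply/eqP; apply/negP => /negP neq.
have ex : exists j, f j != g j by exists i.
have [m fgm minm] := ex_minnP ex.
have below j : (j < m)%N -> f j = g j.
  by move=> jm; apply/eqP; apply/negP => /negP/minm; rewrite leqNgt jm.
move: fgm; case fm: (f m); case gm: (g m) => // _.
  by have := xf_lt below fm gm; rewrite fg ltxx.
have below' j : (j < m)%N -> g j = f j by move=> /below ->.
by have := xf_lt below' gm fm; rewrite fg ltxx.
Qed.

Lemma R_uncountable : ~ countable [set: R].
Proof.
move=> /countable_injP[h hinj]; apply: cantor_diag.
apply/countable_injP; exists (h \o xf) => f g _ _ /= hfg.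
by apply: xf_inj; apply: hinj; rewrite ?inE.
Qed.

Definition dec (x : R) : nat -> bool :=
  match pselect (exists f, xf f = x) with
  | left H => projT1 (cid H)
  | right _ => fun _ => false
  end.

Lemma dec_surj (c : nat -> bool) : exists x, dec x = c.
Proof.
exists (xf c); rewrite /dec; case: pselect => [H|[]]; last by exists c.
by case: (cid H) => f /= /xf_inj.
Qed.
End Inj.

Lemma open_set1C (R : realType) (y : R) : open (~` [set y]).
Proof. rewrite openC; apply: accessible_closed_set1; apply: hausdorff_accessible.
exact: Rhausdorff. Qed.

Lemma baireR (R : realType) (F : nat -> set R) :
  (forall i, open (F i) /\ dense (F i)) -> dense (\bigcap_i F i).
Proof. move=> H. exact: (@Baire R R^o F H). Qed.

Lemma countableU2 T (A B : set T) : countable A -> countable B -> countable (A `|` B).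
Proof.
move=> cA cB; have -> : A `|` B = \bigcup_(i in [set: bool]) (if i then A else B).
  apply/seteqP; split => x.
    by case => ?; [exists true|exists false].
  by move=> [[]] _ ?; [left|right].
by apply: bigcup_countable; [exact: countableP | case].
Qed.

Lemma countable_image T U (f : T -> U) (A : set T) : countable A -> countable (f @` A).
Proof. move=> cA; exact: sub_countable (card_image_le f A) cA. Qed.

Lemma countable_enum T (D : set T) (t0 : T) : countable D -> exists d : nat -> T, D `<=` range d.
Proof.
move=> /countable_injP[h hinj].
pose d n := match pselect (exists b, D b /\ h b = n) with
  | left H => projT1 (cid H) | right _ => t0 end.
exists d => b Db; exists (h b) => //; rewrite /d; case: pselect => [H|[]]; last by exists b.
by case: (cid H) => b' /= [Db' hb]; apply: hinj; rewrite ?inE.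
Qed.

Section Lusin.
Variable R : realType.
Variables (J : Type) (lt : J -> J -> Prop) (e : J -> nat -> bool).
Hypotheses (lt_total : forall a b, lt a b \/ a = b \/ lt b a)
  (seg_count : forall a, countable [set b | lt b a])
  (J_unc : ~ countable [set: J]) (e_surj : forall c, exists a, e a = c).

Definition leJ a b := a = b \/ lt a b.

Lemma leJ_count a : countable [set b | leJ b a].
Proof.
have -> : [set b | leJ b a] = [set a] `|` [set b | lt b a] by [].
by apply: countableU2.
Qed.

Lemma bounded (Y : set J) : countable Y -> exists a, forall b, Y b -> leJ b a.
Proof.
move=> cY; apply: contrapT => nb; apply: J_unc.
apply: (sub_countable (subset_card_le _)
  (bigcup_countable (F := fun b => [set c | lt c b]) cY (fun b _ => seg_count b))).
move=> a _; have [b [Yb nle]] : exists b, Y b /\ ~ leJ b a.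
  apply: contrapT => H; apply: nb; exists a => b Yb; apply: contrapT => nl.
  by apply: H; exists b.
exists b => //=; case: (lt_total a b) => [//|[ab|ba]]; exfalso; apply: nle.
  by left; rewrite ab.
by right.
Qed.

Lemma choose_pt a k : exists x : R, @basis R k !=set0 ->
  @basis R k x /\ forall b, leJ b a -> dense (@Gc R (e b)) -> @Gc R (e b) x.
Proof.
case: (pselect (@basis R k !=set0)) => [k0|nk]; last by exists 0 => /nk.
have [d dD] := countable_enum a (leJ_count a).
pose F n := if pselect (dense (@Gc R (e (d n)))) then @Gc R (e (d n)) else setT.
have oF n : open (F n) /\ dense (F n).
  rewrite /F; case: pselect => [dn|ndn]; first by split => //; exact: Gc_open.
  split; [exact: openT | move=> O [x Ox] oO; by exists x].
have [x [kx Fx]] := baireR oF k0 (@basis_open R k).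
exists x => _; split => // b ab db.
have [n _ dnb] := dD b ab.
by move: (Fx n Logic.I); rewrite /F dnb; case: pselect.
Qed.

Definition xs a k : R := projT1 (cid (choose_pt a k)).
Lemma xsP a k : @basis R k !=set0 ->
  @basis R k (xs a k) /\ forall b, leJ b a -> dense (@Gc R (e b)) -> @Gc R (e b) (xs a k).
Proof. exact: (projT2 (cid (choose_pt a k))). Qed.

Definition Xl : set R := [set y | exists a k, @basis R k !=set0 /\ y = xs a k].

Lemma Xl_L2 c : dense (@Gc R c) -> countable (Xl `&` ~` @Gc R c).
Proof.
move=> dc; have [b eb] := e_surj c.
apply: (sub_countable (subset_card_le _))
  (countable_image (fun p : J * nat => xs p.1 p.2)
     (countableX (seg_count b) (countableP [set: nat]))).
move=> y [[a [k [k0 ->]]] nG]; exists (a, k) => //; split => //=.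
have [_ hx] := xsP a k0.
case: (lt_total a b) => [//|ab]; exfalso; apply: nG; rewrite -eb; apply: hx.
  by case: ab => [->|]; [left|right].
by rewrite eb.
Qed.

Lemma Xl_L1 V : open V -> V !=set0 -> ~ countable (Xl `&` V).
Proof.
move=> oV [v Vv] cY.
have [k [kv kV]] := basis_in oV Vv.
have k0 : @basis R k !=set0 by exists v.
pose Y := Xl `&` @basis R k.
have sub : Y `<=` Xl `&` V by move=> y [Xy ky]; split => //; exact: kV.
have cY' : countable Y := sub_countable (subset_card_le sub) cY.
pose bi (y : R) := projT1 (cid (e_surj (@code_of R (~` [set y])))).
have [a ha] := bounded (countable_image bi cY').
have [kx hx] := xsP a k0.
have Yx : Y (xs a k) by split => //; exists a, k.
have := hx (bi (xs a k)) (ha _ (ex_intro2 _ _ _ Yx erefl)).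
have eb y : e (bi y) = @code_of R (~` [set y]) := projT2 (cid (e_surj _)).
rewrite eb => /(_ (code_dense (@open_set1C R (xs a k)) (@dense_set1C R (xs a k)))).
by move/code_sub; apply.
Qed.

End Lusin.

Section BaireP.
Variable R : realType.
Variable X : set R.
Hypothesis L1 : forall V : set R, open V -> V !=set0 -> ~ countable (X `&` V).
Hypothesis L2 : forall c, dense (@Gc R c) -> countable (X `&` ~` @Gc R c).

Lemma L1ne V : open V -> V !=set0 -> (X `&` V) !=set0.
Proof.
move=> oV V0; apply: contrapT => h; apply: (L1 oV V0).
have -> : X `&` V = set0 by apply/seteqP; split => // y Xy; apply: h; exists y.
exact: countable0.
Qed.

Lemma X_baire : baire_subspace X.
Proof.
move=> D HD U [V [oV ->]] [u [Xu Vu]].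
have HDex : forall n, exists W : set R, open W /\ D n = X `&` W.
  by move=> n; have [[W [oW ->]] _] := HD n; exists W.
case: (choice HDex) => W HW.
have dW n : dense (W n).
  move=> O O0 oO; have [y [Xy Oy]] := L1ne oO O0.
  have [_ dn] := HD n.
  have [z [[Xz Oz] Dz]] := dn (X `&` O) (ex_intro _ O (conj oO erefl)) (ex_intro _ y (conj Xy Oy)).
  by exists z; split => //; move: Dz; rewrite (proj2 (HW n)) => -[].
pose c n := @code_of R (W n).
pose bad := \bigcup_n (X `&` ~` @Gc R (c n)).
have cbad : countable bad.
  apply: bigcup_countable => [|n _]; first exact: countableP.
  by apply: L2; apply: code_dense => //; exact: (proj1 (HW n)).
have [y [[Xy Vy] nb]] : exists y, (X `&` V) y /\ ~ bad y.
  apply: contrapT => h; apply: (L1 oV (ex_intro _ u Vu)).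
  apply: (sub_countable (subset_card_le _) cbad) => y XVy.
  by apply: contrapT => nby; apply: h; exists y.
exists y; split => // n _; rewrite (proj2 (HW n)); split => //.
apply: (@code_sub R (W n)); apply: contrapT => ng; apply: nb; exists n => //.
Qed.

End BaireP.

Section CHpart.
Variable R : realType.

Lemma wo_props : exists le : R -> R -> bool,
  [/\ (forall x y, le x y \/ le y x),
      (forall x y, le x y -> le y x -> x = y) &
      (forall P : R -> Prop, (exists x, P x) -> exists z, P z /\ forall x, P x -> le z x)].
Proof.
have [le wo] := wochoice.well_ordering_principle R.
have wmin (P : R -> Prop) : (exists x, P x) -> exists z, P z /\ forall x, P x -> le z x.
  move=> [x Px].
  have ne : wochoice.nonempty [pred y | `[< P y >]].
    by exists x; apply/asboolP.
  have [z [[zin lb] _]] := wo _ ne.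
  exists z; split; first by move: zin => /asboolP.
  by move=> y Py; apply: lb; apply/asboolP.
exists le; split => //.
- move=> x y; have [z [Pz lz]] := wmin (fun t => t = x \/ t = y) (ex_intro _ x (or_introl erefl)).
  by case: Pz => zE; subst z; [left; apply: lz; right | right; apply: lz; left].
- have lrefl x : le x x.
    have [z [zx lz]] := wmin (fun t => t = x) (ex_intro _ x erefl).
    by subst z; apply: lz.
  move=> x y lxy lyx.
  have ne : wochoice.nonempty [pred t | (t == x) || (t == y)] by exists x; rewrite inE eqxx.
  have [z [_ uniq]] := wo _ ne.
  have mx : wochoice.minimum_of le [pred t | (t == x) || (t == y)] x.
    split; first by rewrite inE eqxx.
    by move=> t /orP[] /eqP ->.
  have my : wochoice.minimum_of le [pred t | (t == x) || (t == y)] y.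
    split; first by rewrite inE eqxx orbT.
    by move=> t /orP[] /eqP ->.
  by rewrite -(uniq _ mx) -(uniq _ my).
Qed.

Lemma ch_index : CH R -> exists (J : Type) (lt : J -> J -> Prop) (e : J -> nat -> bool),
  [/\ (forall a b, lt a b \/ a = b \/ lt b a), (forall a, countable [set b | lt b a]),
      ~ countable [set: J] & forall c, exists a, e a = c].
Proof.
move=> ch.
have [le [ltot lanti lmin]] := wo_props.
pose ltR x y := le x y /\ x <> y.
have triR a b : ltR a b \/ a = b \/ ltR b a.
  case: (pselect (a = b)) => [->|nab]; first by right; left.
  case: (ltot a b) => h; [left | right; right]; split => //.
  by move=> ba; apply: nab.
case: (pselect (forall x, countable [set y | ltR y x])) => [allc|].
  exists R, ltR, (@dec R); split => //; [exact: R_uncountable | exact: dec_surj].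
move=> /existsNP ex.
have [z [nz zmin]] := lmin _ ex.
pose J := {y : R | ltR y z}.
have segc (a : R) : ltR a z -> countable [set y | ltR y a].
  move=> [az nz']; apply: contrapT => na; apply: nz'; apply: lanti => //.
  exact: zmin.
have valinj : injective (fun j : J => proj1_sig j).
  by move=> [x px] [y py] /= xy; subst y; congr exist; apply: Prop_irrelevance.
have [g gs] : exists g : R -> R, set_surj [set y | ltR y z] [set: R] g.
  apply/pcard_surjP.
  case: (ch [set y | ltR y z]) => // /card_eqPle [_ +] //.
exists J, (fun a b : J => ltR (proj1_sig a) (proj1_sig b)).
pose e (j : J) := @dec R (g (proj1_sig j)).
exists e; split.
- move=> a b; case: (triR (proj1_sig a) (proj1_sig b)) => [|[/valinj|]]; auto.
- move=> a; have /countable_injP[h hinj] := segc _ (proj2_sig a).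
  apply/countable_injP; exists (fun j : J => h (proj1_sig j)) => x y xin yin hxy.
  apply: valinj; apply: hinj => //; rewrite inE; move: xin yin; rewrite !inE //.
- move=> cJ; apply: nz.
  have -> : [set y | ltR y z] = (fun j : J => proj1_sig j) @` setT.
    apply/seteqP; split => [y yz|_ [j _ <-]]; last exact: (proj2_sig j).
    by exists (exist _ y yz).
  exact: countable_image.
- move=> c; have [x <-] := dec_surj R c.
  have [y yz gy] := gs x Logic.I.
  by exists (exist _ y yz); rewrite /e /= gy.
Qed.

End CHpart.

Lemma ballR (R : realType) (x r y : R) : ball x r y <-> `|x - y| < r.
Proof. by rewrite /ball. Qed.

Lemma finite_pos (R : realType) (T : eqType) (A : set T) (P : T -> R -> Prop) :
  finite_set A ->
  (forall a, A a -> exists2 r, 0 < r & forall r', 0 < r' -> r' <= r -> P a r') ->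
  exists2 r, 0 < r & forall a, A a -> P a r.
Proof.
move=> /finite_seqP[s ->] H.
suff [r r0 Hr] : exists2 r, 0 < r &
    forall a, a \in s -> forall r', 0 < r' -> r' <= r -> P a r'.
  by exists r => // a ain; apply: Hr.
elim: s H => [|x s IH] H; first by exists 1.
have [r1 r10 H1] := IH (fun a (ain : a \in s) => H a (@mem_behead _ (x :: s) a ain : a \in x :: s)).
have [r2 r20 H2] := H x (mem_head x s).
exists (Num.min r1 r2); first by rewrite lt_min r10 r20.
move=> a; rewrite inE => /orP[/eqP->|ain] r' r'0; rewrite le_min => /andP[h1 h2].
  exact: H2.
exact: H1.
Qed.

Section Game.
Variable R : realType.
Variable X : set R.
Hypothesis L1 : forall V : set R, open V -> V !=set0 -> ~ countable (X `&` V).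
Hypothesis L2 : forall c, dense (@Gc R c) -> countable (X `&` ~` @Gc R c).
Variable sigma : bob_strategy R.
Hypothesis hwin : bob_winning X sigma.

Definition legalB (BB : set (set R)) :=
  finite_set BB /\ forall B, BB B -> relopen X B /\ B !=set0.

Lemma open_ball_in (V : set R) c : open V -> V c -> exists2 r, 0 < r & ball c r `<=` V.
Proof.
move=> oV Vc; have /nbhs_ballP[r r0 rV] : nbhs c V by apply: open_nbhs_nbhs; split.
by exists r.
Qed.

Lemma step_ex n (BB : set (set R)) : exists p : (set R -> R) * R, 0 < p.2 /\ (legalB BB ->
   [/\ forall B, BB B -> X `&` ball (p.1 B) p.2 `<=` B,
       forall B, BB B -> 2 * p.2 <= `|qs R n - p.1 B|
     & forall B B', BB B -> BB B' -> p.1 B' < p.1 B -> 2 * p.2 <= p.1 B - p.1 B']).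
Proof.
case: (pselect (legalB BB)) => [[fin leg]|nl]; last first.
  by exists ((fun _ => 0), 1); split => // /nl.
have cex B : exists c, BB B ->
    [/\ B c, c != qs R n & exists2 r, 0 < r & X `&` ball c r `<=` B].
  case: (pselect (BB B)) => [BBB|nB]; last by exists 0.
  have [[V [oV BE]] B0] := leg B BBB.
  have V0 : V !=set0 by case: B0 => y; rewrite BE => -[_ Vy]; exists y.
  have [c [Bc cq]] : exists c, B c /\ c != qs R n.
    apply: contrapT => h; apply: (L1 oV V0).
    apply: (sub_countable (subset_card_le _) (countable1 (qs R n))).
    move=> y XVy; apply: contrapT => ny; apply: h; exists y; split.
      by rewrite BE.
    by apply/eqP.
  exists c => _; split => //.
  have Vc : V c by move: Bc; rewrite BE => -[].
  have [r r0 rV] := open_ball_in oV Vc.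
  by exists r => //; rewrite BE => y [Xy /rV Vy].
case: (choice cex) => c Hc.
have [r1 r10 H1] : exists2 r : R, 0 < r & forall B, BB B ->
    (X `&` ball (c B) r `<=` B /\ 2 * r <= `|qs R n - c B|).
  apply: (finite_pos fin) => B BBB; have [Bc cq [r r0 rB]] := Hc B BBB.
  have q0 : 0 < `|qs R n - c B| by rewrite normr_gt0 subr_eq0 eq_sym.
  exists (Num.min r (`|qs R n - c B| / 2)); first by rewrite lt_min r0 divr_gt0.
  move=> r' r'0; rewrite le_min => /andP[h1 h2]; split.
    by move=> y [Xy yb]; apply: rB; split => //; by apply: (le_ball h1) yb.
  lra.
have [r2 r20 H2] : exists2 r : R, 0 < r & forall p, (BB `*` BB) p ->
    (c p.2 < c p.1 -> 2 * r <= c p.1 - c p.2).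
  apply: (finite_pos (finite_setX fin fin)) => -[B B'] _ /=; case: (ltP (c B') (c B)) => h.
    exists ((c B - c B') / 2); first by rewrite divr_gt0 // subr_gt0.
    move=> r' r'0 r'le _; lra.
  by exists 1 => // r' _ _; rewrite ltNge h.
exists (c, Num.min r1 r2) => /=; split; first by rewrite lt_min r10 r20.
have m1 : Num.min r1 r2 <= r1 by rewrite ge_min lexx.
have m2 : Num.min r1 r2 <= r2 by rewrite ge_min lexx orbT.
have m0 : 0 < Num.min r1 r2 by rewrite lt_min r10 r20.
move=> _; split.
- move=> B BBB y [Xy yb]; have [+ _] := H1 B BBB; apply; split => //.
  exact: (le_ball m1) yb.
- move=> B BBB; have [_ h] := H1 B BBB; lra.
- move=> B B' BBB BBB' lt; have := H2 (B, B') (conj BBB BBB') lt => /=; lra.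
Qed.


Definition stepc n BB := projT1 (cid (step_ex n BB)).
Definition cB n BB := (stepc n BB).1.
Definition rho n BB := (stepc n BB).2.

Lemma rho_gt0 n BB : 0 < rho n BB.
Proof. by have [] := projT2 (cid (step_ex n BB)). Qed.

Lemma step_spec n BB : legalB BB ->
   [/\ forall B, BB B -> X `&` ball (cB n BB B) (rho n BB) `<=` B,
       forall B, BB B -> 2 * rho n BB <= `|qs R n - cB n BB B|
     & forall B B', BB B -> BB B' -> cB n BB B' < cB n BB B ->
         2 * rho n BB <= cB n BB B - cB n BB B'].
Proof. by have [_] := projT2 (cid (step_ex n BB)). Qed.

Definition gctr n BB (bit : bool) B :=
  if bit then cB n BB B + rho n BB / 2 else cB n BB B - rho n BB / 2.

Definition gAset n BB bit B := X `&` ball (gctr n BB bit B) (rho n BB / 2).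

Definition gAmove (BB : set (set R)) n bit : set (set R) := (gAset n BB bit) @` BB.

Lemma Aset_prop n BB bit B y : gAset n BB bit B y ->
  [/\ X y, `|cB n BB B - y| < rho n BB & (if bit then cB n BB B < y else y < cB n BB B)].
Proof.
move=> [Xy]; rewrite ballR /gctr ltr_norml => /andP[h1 h2].
have r0 := rho_gt0 n BB.
split => //; rewrite ?ltr_norml; case: bit h1 h2 => h1 h2; try (apply/andP; split); lra.
Qed.

Lemma Amove_next BB n bit : legalB BB -> alice_next X BB (gAmove BB n bit).
Proof.
move=> lBB; exists (gAset n BB bit); split => // B BBB.
have [sub _ _] := step_spec n lBB.
have r0 := rho_gt0 n BB.
split; [|split].
- exists (ball (gctr n BB bit B) (rho n BB / 2)); split => //.
  exact: (@ball_open _ R^o).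
- apply: L1ne => //; first exact: (@ball_open _ R^o).
  by exists (gctr n BB bit B); apply: ballxx; rewrite divr_gt0.
- move=> y Ay; have [Xy d _] := Aset_prop Ay; apply: (sub B BBB); split => //.
Qed.

Fixpoint ghist (b : nat -> bool) (n : nat) : seq (set (set R)) :=
  if n is m.+1 then rcons (ghist b m) (gAmove (sigma (ghist b m)) m (b m))
  else [:: [set X]].

Definition gab b n := nth set0 (ghist b n) n.

Lemma size_hist b n : size (ghist b n) = n.+1.
Proof. by elim: n => //= n IH; rewrite size_rcons IH. Qed.

Lemma nth_hist b n i : (i <= n)%N -> nth set0 (ghist b n) i = gab b i.
Proof.
elim: n => [|n IH]; first by rewrite leqn0 => /eqP ->.
rewrite leq_eqVlt => /orP[/eqP -> //|]; rewrite ltnS => iln /=.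
by rewrite nth_rcons size_hist ltnS iln IH.
Qed.

Lemma mkseq_hist b n : mkseq (gab b) n.+1 = ghist b n.
Proof.
apply: (@eq_from_nth _ set0); first by rewrite size_mkseq size_hist.
by move=> i; rewrite size_mkseq => iln; rewrite nth_mkseq // nth_hist.
Qed.

Lemma abS b n : gab b n.+1 = gAmove (sigma (ghist b n)) n (b n).
Proof. by rewrite /gab /= nth_rcons size_hist ltnn eqxx. Qed.

Lemma bm b n : bob_move sigma (gab b) n = sigma (ghist b n).
Proof. by rewrite /bob_move mkseq_hist. Qed.

Lemma hist_ext b b' n : (forall i, (i < n)%N -> b i = b' i) -> ghist b n = ghist b' n.
Proof.
elim: n => //= n IH H; rewrite IH ?H // => i ilt; apply: H; exact: leqW.
Qed.

Lemma X0 : X !=set0.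
Proof.
have [y [Xy _]] := L1ne L1 openT (ex_intro _ (0 : R) Logic.I); by exists y.
Qed.

Lemma legal_all b n : alice_legal_upto X sigma (gab b) n.
Proof.
elim: n => [|n [af IH]].
  split; last by move=> k.
  exists X; split; first by exists setT; split; [exact: openT | rewrite setIT].
  by split; [exact: X0|].
split => // k; rewrite ltnS leq_eqVlt => /orP[/eqP->|/IH//].
have [bl _] := hwin (gab b).
have [fin hB] := bl n (conj af IH).
rewrite bm abS; apply: Amove_next; rewrite -bm; split => // B /hB[? [? ?]]; by split.
Qed.

Lemma legalB_hist b n : legalB (sigma (ghist b n)).
Proof.
have [bl _] := hwin (gab b); have [fin hB] := bl n (legal_all b n).
by rewrite -bm; split => // B /hB[? [? ?]].
Qed.

Lemma bob_sub b n y : (\bigcup_(B in sigma (ghist b n.+1)) B) y ->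
  exists2 B, sigma (ghist b n) B & gAset n (sigma (ghist b n)) (b n) B y.
Proof.
have [bl _] := hwin (gab b); have [fin hB] := bl n.+1 (legal_all b n.+1).
move=> [B' BB' B'y]; rewrite -bm in BB'; have [_ [_ sub]] := hB B' BB'.
have [A + Ay] := sub y B'y; rewrite abS => -[B BBB AE].
by exists B => //; rewrite AE.
Qed.

Definition Pos n : set (seq (set (set R))) :=
  range (fun t : n.-tuple bool => ghist (fun i => nth false t i) n).

Lemma pos_hist b n : Pos n (ghist b n).
Proof.
have sz : size (mkseq b n) == n by rewrite size_mkseq.
exists (Tuple sz) => //=; apply: hist_ext => i ilt /=; by rewrite nth_mkseq.
Qed.

Lemma eps_ex n : exists2 e : R, 0 < e & forall b, e <= rho n (sigma (ghist b n)).
Proof.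
have [e e0 H] : exists2 e : R, 0 < e & forall h, Pos n h -> e <= rho n (sigma h).
  apply: (finite_pos (finite_image _ finite_finset)) => h _.
  by exists (rho n (sigma h)); [exact: rho_gt0 | move=> r' _].
by exists e => // b; apply: H; exact: pos_hist.
Qed.

Definition eps n := projT1 (cid2 (eps_ex n)).
Lemma eps_gt0 n : 0 < eps n. Proof. by case: (projT2 (cid2 (eps_ex n))). Qed.
Lemma eps_le n b : eps n <= rho n (sigma (ghist b n)).
Proof. by case: (projT2 (cid2 (eps_ex n))). Qed.

Definition Wg : set R := \bigcup_n ball (qs R n) (eps n).

Lemma Wg_open : open Wg.
Proof. by apply: bigcup_open => n _; exact: (@ball_open _ R^o). Qed.

Lemma Wg_dense : dense Wg.
Proof.
move=> O O0 oO; have [m Om] := qs_dense oO O0.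
exists (qs R m); split => //; exists m => //; apply: ballxx; exact: eps_gt0.
Qed.

Lemma yb_ex b : exists y, forall n, (\bigcup_(B in sigma (ghist b n)) B) y.
Proof.
have [_ bw] := hwin (gab b); have [y Hy] := bw (legal_all b).
by exists y => n; rewrite -bm; exact: (Hy n Logic.I).
Qed.

Definition yb b := projT1 (cid (yb_ex b)).

Lemma yb_side b n : exists2 B, sigma (ghist b n) B &
  gAset n (sigma (ghist b n)) (b n) B (yb b).
Proof. apply: bob_sub; exact: (projT2 (cid (yb_ex b)) n.+1). Qed.

Lemma yb_in b : (X `&` ~` Gc (code_of Wg)) (yb b).
Proof.
have [B BB hA] := yb_side b 0; have [Xy _ _] := Aset_prop hA; split => // /code_sub [n _].
rewrite ballR => hq.
have [B' BB' hA'] := yb_side b n; have [_ d _] := Aset_prop hA'.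
have [_ hq2 _] := step_spec n (legalB_hist b n).
have := hq2 B' BB'; have := eps_le n b.
have := ler_distD (yb b) (qs R n) (cB n (sigma (ghist b n)) B').
rewrite (distrC (yb b)); have := eps_gt0 n; lra.
Qed.

Lemma yb_inj : injective yb.
Proof.
move=> b b' hy; apply/funext => i; apply/eqP; apply/negP => /negP neq.
have ex : exists j, b j != b' j by exists i.
have [m bm' minm] := ex_minnP ex.
have below j : (j < m)%N -> b j = b' j.
  by move=> jm; apply/eqP; apply/negP => /negP/minm; rewrite leqNgt jm.
have hh := hist_ext below.
have [B BB hA] := yb_side b m; have [B' BB' hA'] := yb_side b' m.
rewrite -hh in BB' hA'; rewrite -hy in hA'.
have [_ _ hpair] := step_spec m (legalB_hist b m).
have [_ d1 s1] := Aset_prop hA; have [_ d2 s2] := Aset_prop hA'.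
move: d1 d2; rewrite !ltr_norml => /andP[d1 d1'] /andP[d2 d2'].
have r0 := rho_gt0 m (sigma (ghist b m)).
move: bm' s1 s2; case: (b m); case: (b' m) => // _ s1 s2.
  have lt : cB m (sigma (ghist b m)) B < cB m (sigma (ghist b m)) B' by lra.
  have := hpair B' B BB' BB lt; lra.
have lt : cB m (sigma (ghist b m)) B' < cB m (sigma (ghist b m)) B by lra.
have := hpair B B' BB BB' lt; lra.
Qed.

Lemma game_false : False.
Proof.
have cC : countable (X `&` ~` Gc (code_of Wg)) := L2 (code_dense Wg_open Wg_dense).
apply: cantor_diag; have /countable_injP[h hinj] := cC.
apply/countable_injP; exists (h \o yb) => f g _ _ /= hfg; apply: yb_inj.
by apply: hinj; rewrite ?inE //; exact: yb_in.
Qed.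

End Game.

Lemma no_bob (R : realType) (X : set R) :
  (forall V : set R, open V -> V !=set0 -> ~ countable (X `&` V)) ->
  (forall c, dense (@Gc R c) -> countable (X `&` ~` @Gc R c)) ->
  ~ bob_has_winning_strategy X.
Proof. by move=> L1 L2 [sigma hwin]; exact: (game_false L1 L2 hwin). Qed.



Theorem proposition4p10 (R : realType) :
  CH R ->
  exists X : set R, baire_subspace X /\ ~ bob_has_winning_strategy X.
Proof.
move=> ch; have [J [lt [e [tot segc unc surj]]]] := ch_index ch.
have L1 := Xl_L1 (R:=R) tot unc surj (seg_count:=segc).
have L2 := Xl_L2 (R:=R) tot segc surj.
exists (Xl e segc); split; first exact: X_baire.
exact: no_bob.
Qed.
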